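(* Let $B_J=L+U\in\mathbb R^{n\times n}$ with $\rho(B_J)>0$, where $L$ is strictly lower triangular and $U$ is strictly upper triangular, and suppose $L\ne O$ and $U\ne O$. Then $UL\ne O$ and $LU\ne O$.
   Context: $\rho$ denotes spectral radius. *)

(* Defs.v *)
From HB Require Import structures.
From mathcomp Require Import all_boot all_order all_algebra.
From mathcomp Require Import complex.
From mathcomp Require Import classical_sets reals.
Set Implicit Arguments. Unset Strict Implicit. Unset Printing Implicit Defensive.
Import Order.TTheory GRing.Theory Num.Theory.
Local Open Scope ring_scope.
Local Open Scope classical_set_scope.

Definition complex_eigenvalues (R : realType) (n : nat) (A : 'M[R]_n)
  : set R[i] :=
  [set l : R[i] | eigenvalue (map_mx (fun x : R => (x%:C)%C) A) l].

(* Spectral radius rho(A) = max { |l| : l complex eigenvalue of A }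
   (the set is finite; sup of the empty set is 0, relevant only for n = 0). *)
Definition spectral_radius (R : realType) (n : nat) (A : 'M[R]_n) : R :=
  sup [set Normc.normc l | l in complex_eigenvalues A].

Definition strictly_lower (R : nzRingType) (n : nat) (L : 'M[R]_n) : Prop :=
  forall i j : 'I_n, (i <= j)%N -> L i j = 0.

Definition strictly_upper (R : nzRingType) (n : nat) (U : 'M[R]_n) : Prop :=
  forall i j : 'I_n, (j <= i)%N -> U i j = 0.

(* Main.v *)
Require Import Defs.
From HB Require Import structures.
From mathcomp Require Import all_boot all_order all_algebra.
From mathcomp Require Import complex.
From mathcomp Require Import classical_sets reals.
Import Order.TTheory GRing.Theory Num.Theory.
Local Open Scope ring_scope.
Set Implicit Arguments. Unset Strict Implicit.

Lemma det_X (F : fieldType) n (M : 'M[{poly F}]_n) :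
  is_trig_mx M -> (forall i, M i i = 'X) -> \det M = 'X ^+ n.
Proof.
move=> tM dM; rewrite det_trig //.
under eq_bigr => i _ do rewrite dM.
by rewrite prodr_const card_ord.
Qed.

Lemma root_Xn (F : fieldType) n (a : F) : root ('X ^+ n) a -> a = 0.
Proof. by rewrite rootE hornerXn expf_eq0 => /andP [_ /eqP]. Qed.

Lemma eig_lower (F : fieldType) n (A : 'M[F]_n) a :
  strictly_lower A -> eigenvalue A a -> a = 0.
Proof.
move=> lA; rewrite eigenvalue_root_char /char_poly det_X.
- exact: root_Xn.
- apply/is_trig_mxP => i j lij; rewrite !mxE lA ?(ltnW lij) //.
  have -> : (i == j) = false by apply/eqP => e; rewrite e ltnn in lij.
  by rewrite mulr0n polyC0 subr0.
- by move=> i; rewrite !mxE eqxx mulr1n lA // polyC0 subr0.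
Qed.

Lemma eig_upper (F : fieldType) n (A : 'M[F]_n) a :
  strictly_upper A -> eigenvalue A a -> a = 0.
Proof.
move=> uA; rewrite eigenvalue_root_char /char_poly -det_tr det_X.
- exact: root_Xn.
- apply/is_trig_mxP => i j lij; rewrite !mxE uA ?(ltnW lij) //.
  have -> : (j == i) = false by apply/eqP => e; rewrite e ltnn in lij.
  by rewrite mulr0n polyC0 subr0.
- by move=> i; rewrite !mxE eqxx mulr1n uA // polyC0 subr0.
Qed.

Lemma eig_sum1 (F : fieldType) n (A B : 'M[F]_n) a :
  strictly_lower A -> strictly_upper B -> B *m A = 0 ->
  eigenvalue (A + B) a -> a = 0.
Proof.
move=> lA uB BA /eigenvalueP [v Hv v0].
have HvA : (v *m A) *m A = a *: (v *m A).
  have := congr1 (mulmx^~ A) Hv.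
  by rewrite mulmxDr mulmxDl -!mulmxA BA mulmx0 addr0 -scalemxAl mulmxA.
have [w0|wn0] := eqVneq (v *m A) 0.
  apply: (eig_upper uB); apply/eigenvalueP; exists v => //.
  by move: Hv; rewrite mulmxDr w0 add0r.
by apply: (eig_lower lA); apply/eigenvalueP; exists (v *m A).
Qed.

Lemma eig_sum2 (F : fieldType) n (A B : 'M[F]_n) a :
  strictly_lower A -> strictly_upper B -> A *m B = 0 ->
  eigenvalue (A + B) a -> a = 0.
Proof.
move=> lA uB AB /eigenvalueP [v Hv v0].
have HvB : (v *m B) *m B = a *: (v *m B).
  have := congr1 (mulmx^~ B) Hv.
  by rewrite mulmxDr mulmxDl -!mulmxA AB mulmx0 add0r -scalemxAl mulmxA.
have [w0|wn0] := eqVneq (v *m B) 0.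
  apply: (eig_lower lA); apply/eigenvalueP; exists v => //.
  by move: Hv; rewrite mulmxDr w0 addr0.
by apply: (eig_upper uB); apply/eigenvalueP; exists (v *m B).
Qed.

Section SR.
Local Open Scope classical_set_scope.
Lemma sr0 (R : realType) n (M : 'M[R]_n) :
  (forall l, eigenvalue (map_mx (fun x : R => (x%:C)%C) M) l -> l = 0) ->
  spectral_radius M = 0.
Proof.
move=> H; rewrite /spectral_radius.
  have sub : [set Normc.normc l | l in complex_eigenvalues M] `<=` [set (0 : R)].
  move=> r [l /H -> <-]; exact: Normc.normc0.
by case: (subset_set1 sub) => ->; [exact: sup0 | exact: sup1].
Qed.
End SR.

Theorem lemma6p1 (R : realType) (n : nat) (L U : 'M[R]_n) :
  strictly_lower L -> strictly_upper U ->
  0 < spectral_radius (L + U) ->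
  L != 0 -> U != 0 ->
  U *m L != 0 /\ L *m U != 0.
Proof.
move=> lL uU rho _ _.
set f := fun x : R => (x%:C)%C.
have ef : f = real_complex R by [].
have mD : map_mx f (L + U) = map_mx f L + map_mx f U by rewrite ef map_mxD.
have mM : forall A B : 'M[R]_n, map_mx f (A *m B) = map_mx f A *m map_mx f B.
  by move=> A B; rewrite ef map_mxM.
have lLc : strictly_lower (map_mx f L) by move=> i j h; rewrite mxE lL // /f rmorph0.
have uUc : strictly_upper (map_mx f U) by move=> i j h; rewrite mxE uU // /f rmorph0.
split; apply/eqP => H; move: rho; rewrite sr0 ?ltxx // => l; rewrite mD.
- apply: eig_sum1 => //; rewrite -mM H; apply/matrixP => i j; rewrite !mxE /f; exact: rmorph0.
- apply: eig_sum2 => //; rewrite -mM H; apply/matrixP => i j; rewrite !mxE /f; exact: rmorph0.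
Qed.
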